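(* Let $W\ge 1$, $K=\lfloor (W-1)/p\rfloor$, let $\mu_c>0,l_c>0$ be such that $C$ is $\mu_c$-strongly convex and $l_c$-smooth, and $\zeta=l_c/\mu_c$. Let $\varphi$ be any initialization oracle and $\mathbf z(0)$ the vector it produces. Take stepsizes $\gamma_g=1/l_c$, $\phi=1-1/\sqrt\zeta$, $\gamma_c=(1+\phi)/l_c$, $\gamma_\omega=\phi^2/(2-\phi)$, $\gamma_y=\phi^2/((1+\phi)(2-\phi))$, $\gamma_z=\phi^2/(1-\phi^2)$. Then $$\mathrm{Regret}(\mathrm{RHGD})\le \zeta\Big(\frac{\zeta-1}{\zeta}\Big)^{K}\mathrm{Regret}(\varphi),\qquad \mathrm{Regret}(\mathrm{RHTM})\le \zeta^2\Big(\frac{\sqrt\zeta-1}{\sqrt\zeta}\Big)^{2K}\mathrm{Regret}(\varphi).$$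
   Context: Setting: $(A,B)$ in canonical form (indices $0=k_0<k_1<\dots<k_m=n$, $\mathcal I=\{k_1,\dots,k_m\}$; rows $i\notin\mathcal I$ of $A$ equal $e_{i+1}^\top$, rows in $\mathcal I$ arbitrary; $j$-th column of $B$ is $e_{k_j}$; $p_i=k_i-k_{i-1}$, controllability index $p=\max_ip_i$; $A(\mathcal I,:)$ = rows $k_1,\dots,k_m$ of $A$). Dynamics $x_{t+1}=Ax_t+Bu_t$, $x_0=0$, cost $J(\mathbf x,\mathbf u)=\sum_{t=0}^{N-1}[f_t(x_t)+g_t(u_t)]+f_N(x_N)$ with $f_t$ $\mu_f$-strongly convex and $l_f$-smooth, $g_t$ convex and $l_g$-smooth. For $\mathbf z=(z_1,\dots,z_N)\in\mathbb R^{mN}$ ($z_t=0$ for $t\le0$): $x_t(\mathbf z)=(z^1_{t-p_1+1},\dots,z^1_t,\dots,z^m_{t-p_m+1},\dots,z^m_t)^\top$, $u_t(\mathbf z)=z_{t+1}-A(\mathcal I,:)x_t(\mathbf z)$, $C(\mathbf z)=\sum_{t=0}^Nf_t(x_t(\mathbf z))+\sum_{t=0}^{N-1}g_t(u_t(\mathbf z))$; $C(\mathbf z)=J(\mathbf x(\mathbf z),\mathbf u(\mathbf z))$ and $\min C=J^*:=\min\{J(\mathbf x,\mathbf u): x_{t+1}=Ax_t+Bu_t,\ x_0=0\}$. Prediction model: at time $t$ the controller knows the current and past states and $f_s,g_s$ for $s\le t+W-1$. An initialization oracle $\varphi$ produces $\mathbf z(0)\in\mathbb R^{mN}$ with $z_{s}(0)$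 depending only on $\{f_r,g_r\}_{r\le s-1}$; $\mathrm{Regret}(\varphi):=J(\mathbf x(\mathbf z(0)),\mathbf u(\mathbf z(0)))-J^*$ (the controller $u_t=z_{t+1}(0)-A(\mathcal I,:)x_t$). For an algorithm, $\mathrm{Regret}=J(\text{its trajectory})-J^*$. RHGD (receding horizon gradient descent) is the online algorithm that, using only the $W$-step lookahead (exploiting that $\partial C/\partial z_t$ depends only on $z_{t-p},\dots,z_{t+p}$ and $f_s,g_s$ for $t-1\le s\le t+p-1$), applies $u_t=z_{t+1}(K)-A(\mathcal I,:)x_t$ where $\mathbf z(j+1)=\mathbf z(j)-\gamma_g\nabla C(\mathbf z(j))$, $j=0,\dots,K-1$, starting from the oracle's $\mathbf z(0)$; its resulting trajectory is $(\mathbf x(\mathbf z(K)),\mathbf u(\mathbf z(K)))$. RHTM (receding horizon triple momentum) is the same with the gradient step replaced by triple momentum: $\boldsymbol\omega(-1)=\boldsymbol\omega(0)=\mathbf y(0)=\mathbf z(0)$ and, for $j\ge0$, $\boldsymbol\omega(j+1)=(1+\gamma_\omega)\boldsymbol\omega(j)-\gamma_\omega\boldsymbol\omega(j-1)-\gamma_c\nabla C(\mathbf y(j))$, $\mathbf y(j+1)=(1+\gamma_y)\boldsymbol\omega(j+1)-\gamma_y\boldsymbol\omega(j)$, $\mathbf z(j+1)=(1+\gamma_z)\boldsymbol\omega(j+1)-\gamma_z\boldsymbol\omega(j)$; it applies $u_t=z_{t+1}(K)-A(\mathcal I,:)x_t$, giving trajectory $(\mathbf x(\mathbf z(K)),\mathbf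 u(\mathbf z(K)))$. *)

(* Defs.v *)
From Stdlib Require Import Reals Lra Lia Arith Bool.
Open Scope R_scope.

(* Vectors of R^d are modelled as functions nat -> R with 1-based
   coordinates 1..d; all other coordinates are 0 (predicate [supp]). *)

Fixpoint sum_lt (N : nat) (f : nat -> R) : R :=
  match N with O => 0 | S N' => sum_lt N' f + f N' end.

Definition fsum (d : nat) (f : nat -> R) : R := sum_lt d (fun i => f (S i)).

Definition supp (d : nat) (x : nat -> R) : Prop :=
  forall i, (i = 0%nat \/ (d < i)%nat) -> x i = 0.

Definition vadd (x y : nat -> R) : nat -> R := fun i => x i + y i.
Definition vsub (x y : nat -> R) : nat -> R := fun i => x i - y i.
Definition vscal (a : R) (x : nat -> R) : nat -> R := fun i => a * x i.

Definition dot (d : nat) (x y : nat -> R) : R := fsum d (fun i => x i * y i).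
Definition nrm2 (d : nat) (x : nat -> R) : R := dot d x x.
Definition norm (d : nat) (x : nat -> R) : R := sqrt (nrm2 d x).

Definition StronglyConvex (d : nat) (mu : R) (F : (nat -> R) -> R) : Prop :=
  forall x y th, supp d x -> supp d y -> 0 <= th <= 1 ->
    F (vadd (vscal th x) (vscal (1 - th) y))
      <= th * F x + (1 - th) * F y - mu / 2 * th * (1 - th) * nrm2 d (vsub x y).

Definition HasGrad (d : nat) (F : (nat -> R) -> R) (G : (nat -> R) -> nat -> R) : Prop :=
  forall x, supp d x ->
    supp d (G x) /\
    forall eps, 0 < eps -> exists delta, 0 < delta /\
      forall h, supp d h -> norm d h < delta ->
        Rabs (F (vadd x h) - F x - dot d (G x) h) <= eps * norm d h.

Definition SmoothWith (d : nat) (l : R) (F : (nat -> R) -> R) (G : (nat -> R) -> nat -> R) : Prop :=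
  HasGrad d F G /\
  forall x y, supp d x -> supp d y -> norm d (vsub (G x) (G y)) <= l * norm d (vsub x y).

Definition Smooth (d : nat) (l : R) (F : (nat -> R) -> R) : Prop :=
  exists G, SmoothWith d l F G.

Definition CanonIdx (n m : nat) (k : nat -> nat) : Prop :=
  (1 <= m)%nat /\ k 0%nat = 0%nat /\ k m = n /\
  forall j, (1 <= j <= m)%nat -> (k (j - 1) < k j)%nat.

Definition InI (m : nat) (k : nat -> nat) (i : nat) : Prop :=
  exists j, (1 <= j <= m)%nat /\ k j = i.

Definition CanonA (n m : nat) (k : nat -> nat) (A : nat -> nat -> R) : Prop :=
  forall i, (1 <= i <= n)%nat -> ~ InI m k i ->
    forall l, (1 <= l <= n)%nat -> A i l = (if Nat.eqb l (S i) then 1 else 0).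

Definition Bmat (k : nat -> nat) (i j : nat) : R := if Nat.eqb i (k j) then 1 else 0.

(* p_i = k_i - k_{i-1}; controllability index p = max_i p_i *)
Fixpoint pmax (k : nat -> nat) (j : nat) : nat :=
  match j with O => O | S j' => Nat.max (pmax k j') (k (S j') - k j')%nat end.

(* z in R^{mN}: z_t^j (t = 1..N, j = 1..m) is coordinate (t-1)*m + j;
   z_t = 0 for t <= 0. *)
Definition zc (N m : nat) (z : nat -> R) (t j : nat) : R :=
  if andb (1 <=? t)%nat (t <=? N)%nat then z ((t - 1) * m + j)%nat else 0.

(* x_t(z)_i = z^j_{t - k_j + i} for k_{j-1} < i <= k_j (i.e. the entries
   z^j_{t-p_j+1},...,z^j_t in block j), 0 when the time index is <= 0 *)
Definition xz (n m N : nat) (k : nat -> nat) (z : nat -> R) (t : nat) : nat -> R :=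
  fun i =>
    if andb (1 <=? i)%nat (i <=? n)%nat then
      fsum m (fun j =>
        if andb (k (j - 1) <? i)%nat (i <=? k j)%nat then
          (if (k j <? t + i)%nat then zc N m z (t + i - k j)%nat j else 0)
        else 0)
    else 0.

Definition uz (n m N : nat) (k : nat -> nat) (A : nat -> nat -> R)
  (z : nat -> R) (t : nat) : nat -> R :=
  fun j =>
    if andb (1 <=? j)%nat (j <=? m)%nat then
      zc N m z (S t) j - fsum n (fun i => A (k j) i * xz n m N k z t i)
    else 0.

Definition Jcost (N : nat) (f g : nat -> (nat -> R) -> R)
  (x u : nat -> nat -> R) : R :=
  sum_lt N (fun t => f t (x t) + g t (u t)) + f N (x N).

Definition Ccost (n m N : nat) (k : nat -> nat) (A : nat -> nat -> R)
  (f g : nat -> (nat -> R) -> R) (z : nat -> R) : R :=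
  sum_lt (S N) (fun t => f t (xz n m N k z t))
  + sum_lt N (fun t => g t (uz n m N k A z t)).

Definition Feasible (n m N : nat) (k : nat -> nat) (A : nat -> nat -> R)
  (x u : nat -> nat -> R) : Prop :=
  (forall t, (t <= N)%nat -> supp n (x t)) /\
  (forall t, (t < N)%nat -> supp m (u t)) /\
  (forall i, x 0%nat i = 0) /\
  (forall t, (t < N)%nat -> forall i, (1 <= i <= n)%nat ->
     x (S t) i = fsum n (fun l => A i l * x t l)
                 + fsum m (fun j => Bmat k i j * u t j)).

Definition IsOptVal (n m N : nat) (k : nat -> nat) (A : nat -> nat -> R)
  (f g : nat -> (nat -> R) -> R) (Jstar : R) : Prop :=
  (exists x u, Feasible n m N k A x u /\ Jcost N f g x u = Jstar) /\
  (forall x u, Feasible n m N k A x u -> Jstar <= Jcost N f g x u).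

Definition RegretZ (n m N : nat) (k : nat -> nat) (A : nat -> nat -> R)
  (f g : nat -> (nat -> R) -> R) (Jstar : R) (z : nat -> R) : R :=
  Jcost N f g (xz n m N k z) (uz n m N k A z) - Jstar.

Definition Oracle : Type :=
  (nat -> (nat -> R) -> R) -> (nat -> (nat -> R) -> R) -> (nat -> R).

Definition IsInitOracle (m N : nat) (phi : Oracle) : Prop :=
  (forall f g, supp (m * N) (phi f g)) /\
  (forall f f' g g' s, (1 <= s <= N)%nat ->
     (forall r, (r + 1 <= s)%nat -> f r = f' r /\ g r = g' r) ->
     forall j, (1 <= j <= m)%nat ->
       phi f g ((s - 1) * m + j)%nat = phi f' g' ((s - 1) * m + j)%nat).

Fixpoint gd_iter (grad : (nat -> R) -> nat -> R) (gam : R) (z0 : nat -> R)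
  (j : nat) : nat -> R :=
  match j with
  | O => z0
  | S j' => let z := gd_iter grad gam z0 j' in vsub z (vscal gam (grad z))
  end.

(* triple momentum; state (omega(j-1), omega(j), y(j)) *)
Fixpoint tm_state (grad : (nat -> R) -> nat -> R) (gc gw gy : R) (z0 : nat -> R)
  (j : nat) : (nat -> R) * (nat -> R) * (nat -> R) :=
  match j with
  | O => (z0, z0, z0)
  | S j' =>
      let '(wp, w, y) := tm_state grad gc gw gy z0 j' in
      let wn := vsub (vsub (vscal (1 + gw) w) (vscal gw wp)) (vscal gc (grad y)) in
      let yn := vsub (vscal (1 + gy) wn) (vscal gy w) in
      (w, wn, yn)
  end.

Definition tm_iter (grad : (nat -> R) -> nat -> R) (gc gw gy gz : R)
  (z0 : nat -> R) (j : nat) : nat -> R :=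
  let '(wp, w, _) := tm_state grad gc gw gy z0 j in
  vsub (vscal (1 + gz) w) (vscal gz wp).

(* Main.v *)
Require Import Defs.
From Stdlib Require Import Reals Lra Lia Arith Bool Field FunctionalExtensionality.
Open Scope R_scope.


Lemma sum_lt_ext N f g : (forall i, (i < N)%nat -> f i = g i) -> sum_lt N f = sum_lt N g.
Proof. induction N; intros H; simpl; auto. rewrite IHN by (intros; apply H; lia). rewrite H by lia. auto. Qed.

Lemma sum_lt_add N f g : sum_lt N (fun i => f i + g i) = sum_lt N f + sum_lt N g.
Proof. induction N; simpl; [ring|rewrite IHN; ring]. Qed.

Lemma sum_lt_le N f g : (forall i, (i < N)%nat -> f i <= g i) -> sum_lt N f <= sum_lt N g.
Proof. induction N; intros H; simpl; [lra|]. assert (H1 := H N ltac:(lia)). 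
 assert (sum_lt N f <= sum_lt N g) by (apply IHN; intros; apply H; lia). lra. Qed.

Lemma sum_lt_nonneg N f : (forall i, (i < N)%nat -> 0 <= f i) -> 0 <= sum_lt N f.
Proof. induction N; intros H; simpl; [lra|]. assert (0 <= f N) by (apply H; lia).
 assert (0 <= sum_lt N f) by (apply IHN; intros; apply H; lia). lra. Qed.

Lemma fsum_ext d f g : (forall i, (1 <= i <= d)%nat -> f i = g i) -> fsum d f = fsum d g.
Proof. intros H; unfold fsum; apply sum_lt_ext; intros; apply H; lia. Qed.

Lemma fsum_le d f g : (forall i, (1 <= i <= d)%nat -> f i <= g i) -> fsum d f <= fsum d g.
Proof. intros H; unfold fsum; apply sum_lt_le; intros; apply H; lia. Qed.

Lemma fsum_zero d f : (forall i, (1 <= i <= d)%nat -> f i = 0) -> fsum d f = 0.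
Proof. intros H. transitivity (fsum d (fun _ => 0)). apply fsum_ext; auto.
 clear H. unfold fsum; induction d; simpl; auto. rewrite IHd. ring. Qed.

Lemma fsum_single d f j : (1 <= j <= d)%nat ->
  (forall i, (1 <= i <= d)%nat -> i <> j -> f i = 0) -> fsum d f = f j.
Proof. unfold fsum. induction d; intros Hj H; [lia|]. simpl.
 destruct (Nat.eq_dec j (S d)) as [->|Hne].
 - rewrite (sum_lt_ext d _ (fun _ => 0)). 2:{ intros; apply H; lia. }
   assert (E : forall n, sum_lt n (fun _ => 0) = 0) by (induction n; simpl; [ring|rewrite IHn; ring]).
   rewrite E; ring.
 - rewrite IHd by (try lia; intros; apply H; lia). rewrite (H (S d)) by lia. ring. Qed.

Lemma fsum_nonneg_zero d f : (forall i, (1 <= i <= d)%nat -> 0 <= f i) -> fsum d f = 0 ->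
  forall i, (1 <= i <= d)%nat -> f i = 0.
Proof. unfold fsum. induction d; intros H0 Hs i Hi; [lia|]. simpl in Hs.
 assert (0 <= sum_lt d (fun i => f (S i))) by (apply sum_lt_nonneg; intros; apply H0; lia).
 assert (0 <= f (S d)) by (apply H0; lia).
 destruct (Nat.eq_dec i (S d)) as [->|]; [lra|]. apply IHd; auto; [intros; apply H0; lia|lra|lia]. Qed.

Ltac lin_sum := unfold nrm2, dot, fsum; 
  let n := fresh "n" in let IH := fresh "IH" in
  match goal with |- context [sum_lt ?d _] => generalize d end;
  intro n; induction n as [|n IH]; cbn [sum_lt]; [ring | rewrite <- IH; ring].

Lemma supp_vsub d x y : supp d x -> supp d y -> supp d (vsub x y).
Proof. unfold supp, vsub; intros Hx Hy i Hi; rewrite Hx, Hy; auto; ring. Qed.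
Lemma supp_vadd d x y : supp d x -> supp d y -> supp d (vadd x y).
Proof. unfold supp, vadd; intros Hx Hy i Hi; rewrite Hx, Hy; auto; ring. Qed.
Lemma supp_vscal d a x : supp d x -> supp d (vscal a x).
Proof. unfold supp, vscal; intros Hx i Hi; rewrite Hx; auto; ring. Qed.

Lemma test d (x y : nat -> R) a : a * dot d x y + nrm2 d x = fsum d (fun i => a * (x i * y i) + x i * x i).
Proof. lin_sum. Qed.


Ltac sum_eq := unfold nrm2, dot, fsum, vsub, vadd, vscal;
  let n := fresh "n" in let IH := fresh "IH" in
  match goal with |- context [sum_lt ?d _] => generalize d end;
  intro n; induction n as [|n IH]; cbn [sum_lt]; [ring | lra].

Lemma nrm2_nonneg d x : 0 <= nrm2 d x.
Proof. unfold nrm2, dot, fsum. apply sum_lt_nonneg. intros; nra. Qed.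

Lemma cs2 d u v : (dot d u v)^2 <= nrm2 d u * nrm2 d v.
Proof.
  assert (Hq : forall t, 0 <= nrm2 d u - 2 * t * dot d u v + t^2 * nrm2 d v).
  { intro t. replace (nrm2 d u - 2 * t * dot d u v + t^2 * nrm2 d v) with (nrm2 d (vsub u (vscal t v))) by sum_eq.
    apply nrm2_nonneg. }
  set (A := nrm2 d u) in *; set (B := nrm2 d v) in *; set (C := dot d u v) in *.
  assert (HA : 0 <= A) by apply nrm2_nonneg. assert (HB : 0 <= B) by apply nrm2_nonneg.
  destruct (Req_dec B 0) as [HB0|HB0].
  - destruct (Req_dec C 0) as [HC|HC]. rewrite HC, HB0; nra.
    exfalso. specialize (Hq ((A+1)/(2*C))). rewrite HB0 in Hq.
    assert (2 * ((A + 1) / (2 * C)) * C = A + 1) by (field; auto). nra.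
  - specialize (Hq (C/B)). assert (HBp : 0 < B) by lra.
    assert (2 * (C / B) * C = 2 * C^2 / B) by (field; auto).
    assert ((C/B)^2 * B = C^2 / B) by (field; auto).
    assert (A - C^2/B >= 0) by nra.
    assert (C^2 / B * B = C^2) by (field; auto).
    assert ((A - C^2/B) * B >= 0) by nra. nra.
Qed.

Lemma norm_scal d h v : norm d (vscal h v) = Rabs h * norm d v.
Proof. unfold norm. replace (nrm2 d (vscal h v)) with (h*h * nrm2 d v) by sum_eq.
  rewrite sqrt_mult_alt by nra. rewrite <- sqrt_Rsqr_abs. reflexivity. Qed.


Lemma norm_nonneg d x : 0 <= norm d x.
Proof. unfold norm; apply sqrt_pos. Qed.

Lemma deriv_line d F G x v c : HasGrad d F G -> supp d x -> supp d v ->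
  derivable_pt_lim (fun t => F (vadd x (vscal t v))) c (dot d (G (vadd x (vscal c v))) v).
Proof.
  intros HG Hx Hv eps Heps.
  set (y := vadd x (vscal c v)).
  assert (Hy : supp d y) by (apply supp_vadd; auto; apply supp_vscal; auto).
  destruct (HG y Hy) as [_ Hd].
  assert (Hnv := norm_nonneg d v). set (nv := norm d v) in *.
  assert (He' : 0 < eps / (2 * (nv + 1))) by (apply Rdiv_lt_0_compat; lra).
  destruct (Hd _ He') as [del [Hdel Hh]].
  assert (Hpos : 0 < del / (nv + 1)) by (apply Rdiv_lt_0_compat; lra).
  exists (mkposreal _ Hpos). simpl. intros h Hh0 Hhd.
  assert (Ef : vadd x (vscal (c + h) v) = vadd y (vscal h v)).
  { apply functional_extensionality; intro i; unfold y, vadd, vscal; ring. }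
  rewrite Ef.
  assert (Habs : 0 < Rabs h) by (apply Rabs_pos_lt; auto).
  assert (Hn : norm d (vscal h v) < del).
  { rewrite norm_scal. fold nv.
    assert (Rabs h * (nv + 1) < del).
    { apply (Rmult_lt_compat_r (nv+1)) in Hhd; [|lra].
      unfold Rdiv in Hhd. rewrite Rmult_assoc, Rinv_l in Hhd by lra. lra. }
    nra. }
  specialize (Hh (vscal h v) (supp_vscal _ _ _ Hv) Hn).
  rewrite norm_scal in Hh. fold nv in Hh.
  assert (Edot : dot d (G y) (vscal h v) = h * dot d (G y) v) by sum_eq.
  rewrite Edot in Hh.
  set (a := F (vadd y (vscal h v)) - F y - h * dot d (G y) v) in *.
  replace ((F (vadd y (vscal h v)) - F y) / h - dot d (G y) v) with (a / h) by (unfold a; field; auto).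
  unfold Rdiv. rewrite Rabs_mult, Rabs_inv.
  assert (Rabs a / Rabs h <= eps / (2 * (nv + 1)) * nv).
  { apply (Rmult_le_reg_r (Rabs h)); auto. unfold Rdiv. rewrite Rmult_assoc, Rinv_l by lra. nra. }
  assert (eps / (2 * (nv + 1)) * nv < eps).
  { unfold Rdiv. rewrite Rmult_assoc. 
    assert (/(2*(nv+1)) * nv < 1).
    { apply (Rmult_lt_reg_l (2*(nv+1))); [lra|]. rewrite <- Rmult_assoc, Rinv_r by lra. lra. }
    nra. }
  unfold Rdiv in *. lra.
Qed.

Lemma desc d F G L x y : SmoothWith d L F G -> 0 <= L -> supp d x -> supp d y ->
  F y <= F x + dot d (G x) (vsub y x) + L / 2 * nrm2 d (vsub y x).
Proof.
  intros [HG HL] HL0 Hx Hy.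
  set (v := vsub y x). assert (Hv : supp d v) by (apply supp_vsub; auto).
  set (a := dot d (G x) v). set (b := L / 2 * nrm2 d v).
  set (psi := fun t => F (vadd x (vscal t v)) - a * t - b * (t * t)).
  assert (Hd : forall c, 0 <= c <= 1 -> derivable_pt_lim psi c (dot d (G (vadd x (vscal c v))) v - a * 1 - b * (1 * c + c * 1))).
  { intros c _. unfold psi.
    assert (H1 := deriv_line d F G x v c HG Hx Hv).
    assert (H2 := derivable_pt_lim_scal id a c 1 (derivable_pt_lim_id c)).
    assert (H3 := derivable_pt_lim_scal (id * id)%F b c _ (derivable_pt_lim_mult id id c 1 1 (derivable_pt_lim_id c) (derivable_pt_lim_id c))).
    assert (H4 := derivable_pt_lim_minus _ _ _ _ _ (derivable_pt_lim_minus _ _ _ _ _ H1 H2) H3).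
    unfold minus_fct, mult_real_fct, mult_fct, id in H4. exact H4. }
  destruct (MVT_cor2 psi _ 0 1 Rlt_0_1 Hd) as [c [Hc Hc01]].
  assert (Hle : dot d (G (vadd x (vscal c v))) v - a * 1 - b * (1 * c + c * 1) <= 0).
  { unfold a, b.
    set (w := vsub (G (vadd x (vscal c v))) (G x)).
    assert (E1 : dot d (G (vadd x (vscal c v))) v - dot d (G x) v = dot d w v) by (unfold w; sum_eq).
    assert (Hcs := cs2 d w (vscal c v)).
    assert (Hlip : norm d w <= L * norm d (vsub (vadd x (vscal c v)) x)).
    { apply HL; auto. apply supp_vadd; auto. apply supp_vscal; auto. }
    assert (Ev : vsub (vadd x (vscal c v)) x = vscal c v) by (apply functional_extensionality; intro; unfold vsub, vadd, vscal; ring).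
    rewrite Ev in Hlip.
    assert (Hw2 : nrm2 d w <= L^2 * nrm2 d (vscal c v)).
    { unfold norm in Hlip. assert (Hn1 := nrm2_nonneg d w). assert (Hn2 := nrm2_nonneg d (vscal c v)).
      assert (0 <= sqrt (nrm2 d w)) by apply sqrt_pos.
      assert (sqrt (nrm2 d w) * sqrt (nrm2 d w) <= (L * sqrt (nrm2 d (vscal c v))) * (L * sqrt (nrm2 d (vscal c v)))) by nra.
      rewrite sqrt_sqrt in H0 by auto. 
      replace ((L * sqrt (nrm2 d (vscal c v))) * (L * sqrt (nrm2 d (vscal c v)))) with (L^2 * (sqrt (nrm2 d (vscal c v)) * sqrt (nrm2 d (vscal c v)))) in H0 by ring.
      rewrite sqrt_sqrt in H0 by auto. lra. }
    assert (E2 : dot d w (vscal c v) = c * dot d w v) by sum_eq.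
    assert (E3 : nrm2 d (vscal c v) = c * c * nrm2 d v) by sum_eq.
    rewrite E2 in Hcs. rewrite E3 in Hcs, Hw2.
    assert (Hn := nrm2_nonneg d v). assert (Hnw := nrm2_nonneg d w).
    set (D := dot d w v) in *. set (N := nrm2 d v) in *.
    (* (cD)^2 <= nrm2 w * c^2 N <= L^2 c^4 N^2 , so D <= L c N *)
    assert (HD2 : (c * D)^2 <= (L * c * c * N)^2).
    { assert (nrm2 d w * (c * c * N) <= L ^ 2 * (c * c * N) * (c * c * N)).
      { apply Rmult_le_compat_r; [nra|lra]. }
      nra. }
    assert (HcD : c * D <= L * c * c * N).
    { assert (0 <= L * c * c * N) by (apply Rmult_le_pos; [nra|lra]).
      destruct (Rle_dec (c*D) 0); [lra|]. nra. }
    assert (D <= L * c * N).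
    { apply (Rmult_le_reg_l c); [lra|]. nra. }
    nra. }
  unfold psi in Hc.
  replace (vadd x (vscal 1 v)) with y in Hc by (apply functional_extensionality; intro; unfold v, vadd, vsub, vscal; ring).
  replace (vadd x (vscal 0 v)) with x in Hc by (apply functional_extensionality; intro; unfold v, vadd, vsub, vscal; ring).
  fold v. fold a. unfold b in *. nra.
Qed.


Lemma eps_le0 A B : 0 <= B -> (forall eps, 0 < eps -> A <= eps * B) -> A <= 0.
Proof. intros HB H. destruct (Rle_dec A 0); auto. exfalso.
  assert (HA : 0 < A) by lra. specialize (H (A / (B + 1)) ltac:(apply Rdiv_lt_0_compat; lra)).
  assert (A / (B+1) * B < A).
  { unfold Rdiv. rewrite Rmult_assoc. assert (/(B+1) * B < 1).
    { apply (Rmult_lt_reg_l (B+1)); [lra|]. rewrite <- Rmult_assoc, Rinv_r by lra. lra. }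
    nra. }
  lra. Qed.

Lemma sc1 d F G mu x y : StronglyConvex d mu F -> HasGrad d F G -> 0 <= mu -> supp d x -> supp d y ->
  F x + dot d (G x) (vsub y x) + mu / 2 * nrm2 d (vsub y x) <= F y.
Proof.
  intros Hsc HG Hmu Hx Hy.
  set (v := vsub y x). assert (Hv : supp d v) by (apply supp_vsub; auto).
  assert (Hnv := norm_nonneg d v). set (nv := norm d v) in *.
  assert (HN := nrm2_nonneg d v). set (N := nrm2 d v) in *.
  set (D := dot d (G x) v).
  enough (D + mu/2 * N - (F y - F x) <= 0) by lra.
  apply (eps_le0 _ (nv + mu/2 * N)); [nra|].
  intros eps Heps.
  destruct (HG x Hx) as [_ Hd]. destruct (Hd eps Heps) as [del [Hdel Hh]].
  set (th := Rmin eps (Rmin (1/2) (del / (nv + 1)))).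
  assert (Hq : 0 < del / (nv + 1)) by (apply Rdiv_lt_0_compat; lra).
  assert (Hth0 : 0 < th) by (unfold th; repeat apply Rmin_pos; lra).
  assert (Hth1 : th <= eps) by apply Rmin_l.
  assert (Hth2 : th <= 1/2) by (eapply Rle_trans; [apply Rmin_r|apply Rmin_l]).
  assert (Hth3 : th <= del / (nv+1)) by (eapply Rle_trans; [apply Rmin_r|apply Rmin_r]).
  assert (Hn : norm d (vscal th v) < del).
  { rewrite norm_scal. rewrite Rabs_right by lra. fold nv.
    assert (th * (nv + 1) <= del).
    { apply (Rmult_le_compat_r (nv+1)) in Hth3; [|lra].
      unfold Rdiv in Hth3. rewrite Rmult_assoc, Rinv_l in Hth3 by lra. lra. }
    nra. }
  specialize (Hh (vscal th v) (supp_vscal _ _ _ Hv) Hn).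
  rewrite norm_scal, (Rabs_right th) in Hh by lra. fold nv in Hh.
  assert (Edot : dot d (G x) (vscal th v) = th * D) by (unfold D; sum_eq).
  rewrite Edot in Hh.
  assert (Hs := Hsc y x th Hy Hx ltac:(lra)).
  replace (vadd (vscal th y) (vscal (1 - th) x)) with (vadd x (vscal th v)) in Hs
    by (apply functional_extensionality; intro; unfold v, vadd, vsub, vscal; ring).
  fold v N in Hs.
  assert (Hh1 : F x + th * D - eps * (th * nv) <= F (vadd x (vscal th v)))
    by (revert Hh; unfold Rabs; destruct (Rcase_abs _); intro; lra).
  assert (th * (D - eps * nv) <= th * (F y - F x - mu / 2 * (1 - th) * N)) by nra.
  assert (D - eps * nv <= F y - F x - mu / 2 * (1 - th) * N) by (apply (Rmult_le_reg_l th); auto).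
  assert (mu / 2 * th * N <= mu / 2 * eps * N).
  { apply Rmult_le_compat_r; auto. apply Rmult_le_compat_l; lra. }
  nra.
Qed.


Lemma interp d F G mu L a b : StronglyConvex d mu F -> SmoothWith d L F G -> 0 <= mu <= L ->
  supp d a -> supp d b ->
  (L - mu) * (F a - F b - dot d (G b) (vsub a b) - mu / 2 * nrm2 d (vsub a b))
   - 1/2 * nrm2 d (vsub (vsub (G a) (G b)) (vscal mu (vsub a b))) >= 0.
Proof.
  intros Hsc Hsm Hmu Ha Hb.
  assert (HG := proj1 Hsm).
  assert (Hga : supp d (G a)) by (apply (HG a Ha)).
  assert (Hgb : supp d (G b)) by (apply (HG b Hb)).
  set (v := vsub (vsub (G a) (G b)) (vscal mu (vsub a b))).
  assert (Hv : supp d v) by (repeat (apply supp_vsub || apply supp_vscal); auto).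
  assert (HN := nrm2_nonneg d v). set (N := nrm2 d v) in *.
  set (Dv := F a - F b - dot d (G b) (vsub a b) - mu / 2 * nrm2 d (vsub a b)).
  assert (Ht : forall t, t * N - (L - mu) / 2 * (t * t) * N <= Dv).
  { intro t.
    assert (Hy : supp d (vsub a (vscal t v))) by (apply supp_vsub; auto; apply supp_vscal; auto).
    assert (H1 := sc1 d F G mu b (vsub a (vscal t v)) Hsc HG ltac:(lra) Hb Hy).
    assert (H2 := desc d F G L a (vsub a (vscal t v)) Hsm ltac:(lra) Ha Hy).
    assert (E : dot d (G a) (vsub (vsub a (vscal t v)) a) + L / 2 * nrm2 d (vsub (vsub a (vscal t v)) a)
      - dot d (G b) (vsub (vsub a (vscal t v)) b) - mu / 2 * nrm2 d (vsub (vsub a (vscal t v)) b)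
      = - dot d (G b) (vsub a b) - mu / 2 * nrm2 d (vsub a b) - t * N + (L - mu) / 2 * (t * t) * N)
      by (unfold N, v; sum_eq).
    unfold Dv. lra. }
  destruct (Req_dec (L - mu) 0) as [HL|HL].
  - assert (HN0 : N = 0).
    { destruct (Req_dec N 0); auto. exfalso.
      specialize (Ht ((Rabs Dv + 1) / N)). rewrite HL in Ht.
      assert ((Rabs Dv + 1) / N * N = Rabs Dv + 1) by (field; auto).
      assert (Dv <= Rabs Dv) by apply Rle_abs. lra. }
    rewrite HL, HN0. lra.
  - specialize (Ht (1 / (L - mu))).
    assert (E : 1 / (L - mu) * N - (L - mu) / 2 * (1 / (L - mu) * (1 / (L - mu))) * N = N / (2 * (L - mu)))
      by (field; auto).
    rewrite E in Ht.
    assert (Hp : 0 < L - mu) by lra.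
    assert ((L - mu) * (N / (2 * (L - mu))) = N / 2) by (field; auto).
    assert ((L - mu) * (N / (2 * (L - mu))) <= (L - mu) * Dv) by (apply Rmult_le_compat_l; lra).
    fold Dv. lra.
Qed.

Lemma grad_min d F G L zs : SmoothWith d L F G -> 0 < L -> supp d zs ->
  (forall z, supp d z -> F zs <= F z) -> forall i, G zs i = 0.
Proof.
  intros Hsm HL Hzs Hmin.
  assert (Hg : supp d (G zs)) by (apply (proj1 Hsm zs Hzs)).
  set (y := vsub zs (vscal (1/L) (G zs))).
  assert (Hy : supp d y) by (apply supp_vsub; auto; apply supp_vscal; auto).
  assert (H1 := desc d F G L zs y Hsm ltac:(lra) Hzs Hy).
  assert (H2 := Hmin y Hy).
  assert (E : dot d (G zs) (vsub y zs) + L / 2 * nrm2 d (vsub y zs) = - (1 / (2 * L)) * nrm2 d (G zs)).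
  { unfold y. replace (- (1 / (2 * L)) * nrm2 d (G zs)) with ((- (1/L) + L/2 * (1/L) * (1/L)) * nrm2 d (G zs)) by (field; lra).
    sum_eq. }
  assert (HN := nrm2_nonneg d (G zs)).
  assert (Hz : nrm2 d (G zs) = 0).
  { assert (0 < 1 / (2 * L)) by (apply Rdiv_lt_0_compat; lra). nra. }
  intro i. destruct (le_lt_dec 1 i); [destruct (le_lt_dec i d)|].
  - assert (Hsq := fsum_nonneg_zero d (fun i => G zs i * G zs i) ltac:(intros; nra) Hz i ltac:(lia)).
    simpl in Hsq. nra.
  - apply Hg; lia.
  - apply Hg; lia.
Qed.


Lemma div_nonneg a b : 0 <= a -> 0 < b -> 0 <= a / b.
Proof. intros; unfold Rdiv; apply Rmult_le_pos; [lra|left; apply Rinv_0_lt_compat; lra]. Qed.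

Lemma gd_step d F G mu L z zs : StronglyConvex d mu F -> SmoothWith d L F G -> 0 < mu <= L ->
  supp d z -> supp d zs -> (forall y, supp d y -> F zs <= F y) ->
  F (vsub z (vscal (1/L) (G z))) - F zs <= (1 - mu / L) * (F z - F zs).
Proof.
  intros Hsc Hsm Hmu Hz Hzs Hmin.
  assert (Hg : supp d (G z)) by (apply (proj1 Hsm z Hz)).
  set (y := vsub z (vscal (1/L) (G z))).
  assert (Hy : supp d y) by (apply supp_vsub; auto; apply supp_vscal; auto).
  assert (H1 := desc d F G L z y Hsm ltac:(lra) Hz Hy).
  assert (E : dot d (G z) (vsub y z) + L / 2 * nrm2 d (vsub y z) = - (1 / (2 * L)) * nrm2 d (G z)).
  { unfold y. replace (- (1 / (2 * L)) * nrm2 d (G z)) with ((- (1/L) + L/2 * (1/L) * (1/L)) * nrm2 d (G z)) by (field; lra).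
    sum_eq. }
  assert (H2 := sc1 d F G mu z zs Hsc (proj1 Hsm) ltac:(lra) Hz Hzs).
  assert (H3 : 0 <= dot d (G z) (vsub zs z) + mu / 2 * nrm2 d (vsub zs z) + 1 / (2 * mu) * nrm2 d (G z)).
  { assert (E2 : nrm2 d (vadd (vscal mu (vsub zs z)) (G z)) = mu * mu * nrm2 d (vsub zs z) + 2 * mu * dot d (G z) (vsub zs z) + nrm2 d (G z)) by sum_eq.
    assert (Hn := nrm2_nonneg d (vadd (vscal mu (vsub zs z)) (G z))).
    replace (dot d (G z) (vsub zs z) + mu / 2 * nrm2 d (vsub zs z) + 1 / (2 * mu) * nrm2 d (G z))
      with (nrm2 d (vadd (vscal mu (vsub zs z)) (G z)) / (2 * mu)) by (rewrite E2; field; lra).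
    apply div_nonneg; lra. }
  assert (HN := nrm2_nonneg d (G z)). set (N := nrm2 d (G z)) in *.
  assert (Hmin' := Hmin z Hz).
  assert (HA : F z - F zs <= N / (2 * mu)) by (unfold Rdiv in *; lra).
  assert (HB : mu / L * (F z - F zs) <= N / (2 * L)).
  { assert (mu / L * (N / (2 * mu)) = N / (2 * L)) by (field; lra).
    assert (0 <= mu / L) by (apply div_nonneg; lra).
    assert (mu / L * (F z - F zs) <= mu / L * (N / (2 * mu))) by (apply Rmult_le_compat_l; lra).
    lra. }
  unfold Rdiv in *. lra.
Qed.

Lemma gd_supp d G gam z0 : (forall x, supp d x -> supp d (G x)) -> supp d z0 ->
  forall K, supp d (gd_iter G gam z0 K).
Proof. intros HG Hz0 K; induction K; simpl; auto. apply supp_vsub; auto. apply supp_vscal; auto. Qed.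

Lemma gd_bound d F G mu L z0 zs : StronglyConvex d mu F -> SmoothWith d L F G -> 0 < mu <= L ->
  supp d z0 -> supp d zs -> (forall y, supp d y -> F zs <= F y) ->
  forall K, F (gd_iter G (1/L) z0 K) - F zs <= (1 - mu / L) ^ K * (F z0 - F zs).
Proof.
  intros Hsc Hsm Hmu Hz0 Hzs Hmin K.
  assert (HG : forall x, supp d x -> supp d (G x)) by (intros x Hx; apply (proj1 Hsm x Hx)).
  induction K; simpl. lra.
  assert (Hs := gd_step d F G mu L (gd_iter G (1/L) z0 K) zs Hsc Hsm Hmu (gd_supp d G _ z0 HG Hz0 K) Hzs Hmin).
  assert (0 <= 1 - mu / L).
  { assert (mu / L <= 1) by (apply (Rmult_le_reg_r L); [lra|]; unfold Rdiv; rewrite Rmult_assoc, Rinv_l; lra). lra. }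
  assert ((1 - mu / L) * (F (gd_iter G (1 / L) z0 K) - F zs) <= (1 - mu / L) * ((1 - mu / L) ^ K * (F z0 - F zs)))
    by (apply Rmult_le_compat_l; auto).
  lra.
Qed.


Definition INTq0 (mu L a b ga gb : R) : R :=
  (L - mu) * (- (gb * (a - b)) - mu / 2 * ((a - b) * (a - b))) - 1/2 * ((ga - gb - mu * (a - b)) * (ga - gb - mu * (a - b))).

Lemma tm_scalar mu L s r gc gw gy gz p w xs g1 g2 :
  0 < mu -> 1 <= s -> L = mu * s ^ 2 -> r = 1 - 1 / s -> gc = (1 + r) / L -> gw = r ^ 2 / (2 - r) ->
  gy = r ^ 2 / ((1 + r) * (2 - r)) -> gz = r ^ 2 / (1 - r ^ 2) ->
  let y := (1 + gy) * w - gy * p in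
  let wn := (1 + gw) * w - gw * p - gc * g1 in
  let yn := (1 + gy) * wn - gy * w in
  let wnn := (1 + gw) * wn - gw * w - gc * g2 in
  let xk := (1 + gz) * wn - gz * w in
  let xk1 := (1 + gz) * wnn - gz * wn in
  INTq0 mu L yn xs g2 0 + mu * L * ((xk1 - xs) * (xk1 - xs))
  - r ^ 2 * (INTq0 mu L y xs g1 0 + mu * L * ((xk - xs) * (xk - xs)))
  + (1 - r ^ 2) * INTq0 mu L xs yn 0 g2 + r ^ 2 * INTq0 mu L y yn g1 g2 = 0.
Proof.
  intros Hmu Hs HL Hr Hgc Hgw Hgy Hgz y wn yn wnn xk xk1.
  unfold xk1, xk, wnn, yn, wn, y, INTq0. subst gc gw gy gz r L.
  field. repeat split; intro; lra.
Qed.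

Lemma w1_scalar mu L s r gc gw gz z0 xs g0 :
  0 < mu -> 1 <= s -> L = mu * s ^ 2 -> r = 1 - 1 / s -> gc = (1 + r) / L -> gw = r ^ 2 / (2 - r) ->
  gz = r ^ 2 / (1 - r ^ 2) ->
  let w1 := (1 + gw) * z0 - gw * z0 - gc * g0 in
  let x1 := (1 + gz) * w1 - gz * z0 in
  mu ^ 2 * s ^ 2 * (s - 1) ^ 2 * ((z0 - xs) * (z0 - xs))
  - (INTq0 mu L z0 xs g0 0 + mu * L * ((x1 - xs) * (x1 - xs)))
  - 2 * s / (s + 1) * INTq0 mu L xs z0 0 g0 - (s - 1) / (s + 1) * INTq0 mu L z0 xs g0 0
  = (s - 1) / (s + 1) * ((L * (z0 - xs) - g0) * (L * (z0 - xs) - g0)).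
Proof.
  intros Hmu Hs HL Hr Hgc Hgw Hgz w1 x1.
  unfold x1, w1, INTq0. subst gc gw gz r L.
  field. repeat split; intro; lra.
Qed.


Definition INTe d (F : (nat -> R) -> R) G mu L a b :=
  (L - mu) * (F a - F b - dot d (G b) (vsub a b) - mu / 2 * nrm2 d (vsub a b))
   - 1/2 * nrm2 d (vsub (vsub (G a) (G b)) (vscal mu (vsub a b))).

Lemma tm_vec_step d F G mu L s r gc gw gy gz zs p w Y0 Y1 :
  0 < mu -> 1 <= s -> L = mu * s ^ 2 -> r = 1 - 1 / s -> gc = (1 + r) / L -> gw = r ^ 2 / (2 - r) ->
  gy = r ^ 2 / ((1 + r) * (2 - r)) -> gz = r ^ 2 / (1 - r ^ 2) ->
  G zs = (fun _ => 0) ->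
  Y0 = vsub (vscal (1 + gy) w) (vscal gy p) ->
  Y1 = vsub (vscal (1 + gy) (vsub (vsub (vscal (1 + gw) w) (vscal gw p)) (vscal gc (G Y0))))
            (vscal gy w) ->
  let wn := vsub (vsub (vscal (1 + gw) w) (vscal gw p)) (vscal gc (G Y0)) in
  let wnn := vsub (vsub (vscal (1 + gw) wn) (vscal gw w)) (vscal gc (G Y1)) in
  let X1 := vsub (vscal (1 + gz) wn) (vscal gz w) in
  let X2 := vsub (vscal (1 + gz) wnn) (vscal gz wn) in
  INTe d F G mu L Y1 zs + mu * L * nrm2 d (vsub X2 zs)
  - r ^ 2 * (INTe d F G mu L Y0 zs + mu * L * nrm2 d (vsub X1 zs))
  + (1 - r ^ 2) * INTe d F G mu L zs Y1 + r ^ 2 * INTe d F G mu L Y0 Y1 = 0.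
Proof.
  intros Hmu Hs HL Hr Hgc Hgw Hgy Hgz Hgzs HY0 HY1 wn wnn X1 X2.
  unfold X2, X1, wnn, wn, INTe. rewrite Hgzs.
  set (g1 := G Y0) in *. set (g2 := G Y1) in *. set (f0 := F Y0). set (f1 := F Y1). set (fs := F zs).
  clearbody g1 g2 f0 f1 fs. subst Y0 Y1.
  unfold nrm2, dot, fsum, vsub, vadd, vscal.
  generalize d. intro n. induction n as [|n IH]; cbn [sum_lt]; [ring|].
  assert (Hp := tm_scalar mu L s r gc gw gy gz (p (S n)) (w (S n)) (zs (S n)) (g1 (S n)) (g2 (S n))
     Hmu Hs HL Hr Hgc Hgw Hgy Hgz).
  cbv zeta in Hp. unfold INTq0 in Hp. lra.
Qed.

Lemma w1_vec d F G mu L s r gc gw gz zs z0 :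
  0 < mu -> 1 <= s -> L = mu * s ^ 2 -> r = 1 - 1 / s -> gc = (1 + r) / L -> gw = r ^ 2 / (2 - r) ->
  gz = r ^ 2 / (1 - r ^ 2) ->
  G zs = (fun _ => 0) ->
  let w1 := vsub (vsub (vscal (1 + gw) z0) (vscal gw z0)) (vscal gc (G z0)) in
  let x1 := vsub (vscal (1 + gz) w1) (vscal gz z0) in
  mu ^ 2 * s ^ 2 * (s - 1) ^ 2 * nrm2 d (vsub z0 zs)
  - (INTe d F G mu L z0 zs + mu * L * nrm2 d (vsub x1 zs))
  - 2 * s / (s + 1) * INTe d F G mu L zs z0 - (s - 1) / (s + 1) * INTe d F G mu L z0 zs
  = (s - 1) / (s + 1) * nrm2 d (vsub (vscal L (vsub z0 zs)) (G z0)).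
Proof.
  intros Hmu Hs HL Hr Hgc Hgw Hgz Hgzs w1 x1.
  unfold x1, w1, INTe. rewrite Hgzs.
  set (g0 := G z0) in *. set (f0 := F z0). set (fs := F zs). clearbody g0 f0 fs.
  unfold nrm2, dot, fsum, vsub, vadd, vscal.
  generalize d. intro n. induction n as [|n IH]; cbn [sum_lt]; [field; lra|].
  assert (Hp := w1_scalar mu L s r gc gw gz (z0 (S n)) (zs (S n)) (g0 (S n))
     Hmu Hs HL Hr Hgc Hgw Hgz).
  cbv zeta in Hp. unfold INTq0 in Hp. lra.
Qed.


Section TM.
Variables (G : (nat -> R) -> nat -> R) (gc gw gy gz : R) (z0 : nat -> R).
Definition tmP j := fst (fst (tm_state G gc gw gy z0 j)).
Definition tmW j := snd (fst (tm_state G gc gw gy z0 j)).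
Definition tmY j := snd (tm_state G gc gw gy z0 j).

Lemma tmP_S j : tmP (S j) = tmW j.
Proof. unfold tmP, tmW; simpl. destruct (tm_state G gc gw gy z0 j) as [[a b] c]; reflexivity. Qed.
Lemma tmW_S j : tmW (S j) = vsub (vsub (vscal (1 + gw) (tmW j)) (vscal gw (tmP j))) (vscal gc (G (tmY j))).
Proof. unfold tmP, tmW, tmY; simpl. destruct (tm_state G gc gw gy z0 j) as [[a b] c]; reflexivity. Qed.
Lemma tmY_S j : tmY (S j) = vsub (vscal (1 + gy) (tmW (S j))) (vscal gy (tmW j)).
Proof. unfold tmP, tmW, tmY; simpl. destruct (tm_state G gc gw gy z0 j) as [[a b] c]; reflexivity. Qed.
Lemma tmY_inv j : tmY j = vsub (vscal (1 + gy) (tmW j)) (vscal gy (tmP j)).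
Proof. destruct j. unfold tmY, tmW, tmP; simpl. apply functional_extensionality; intro; unfold vsub, vscal; ring.
  rewrite tmY_S, tmP_S. reflexivity. Qed.
Lemma tm_iter_eq j : tm_iter G gc gw gy gz z0 j = vsub (vscal (1 + gz) (tmW j)) (vscal gz (tmP j)).
Proof. unfold tm_iter, tmP, tmW. destruct (tm_state G gc gw gy z0 j) as [[a b] c]; reflexivity. Qed.
Lemma tm_supp d : (forall x, supp d x -> supp d (G x)) -> supp d z0 ->
  forall j, supp d (tmP j) /\ supp d (tmW j) /\ supp d (tmY j).
Proof. intros HG Hz j. induction j as [|j [H1 [H2 H3]]].
  - unfold tmP, tmW, tmY; simpl; auto.
  - rewrite tmP_S, tmY_S, tmW_S. 
    assert (supp d (vsub (vsub (vscal (1 + gw) (tmW j)) (vscal gw (tmP j))) (vscal gc (G (tmY j))))).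
    { repeat (apply supp_vsub || apply supp_vscal); auto. }
    repeat split; auto. repeat (apply supp_vsub || apply supp_vscal); auto.
Qed.
End TM.

Lemma dot_zero_l d v : dot d (fun _ => 0) v = 0.
Proof. unfold dot; apply fsum_zero; intros; ring. Qed.

Lemma pow_mult2 r m : (r ^ 2) ^ m = r ^ (2 * m).
Proof. rewrite pow_mult. reflexivity. Qed.

Lemma tm_bound d F G mu L s r gc gw gy gz z0 zs :
  StronglyConvex d mu F -> SmoothWith d L F G -> 0 < mu ->
  1 <= s -> L = mu * s ^ 2 -> r = 1 - 1 / s -> gc = (1 + r) / L -> gw = r ^ 2 / (2 - r) ->
  gy = r ^ 2 / ((1 + r) * (2 - r)) -> gz = r ^ 2 / (1 - r ^ 2) ->
  supp d z0 -> supp d zs -> (forall y, supp d y -> F zs <= F y) ->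
  forall K, F (tm_iter G gc gw gy gz z0 K) - F zs <= s ^ 4 * r ^ (2 * K) * (F z0 - F zs).
Proof.
  intros Hsc Hsm Hmu Hs HL Hr Hgc Hgw Hgy Hgz Hz0 Hzs Hmin K.
  assert (Hs2 : 1 <= s ^ 2) by nra.
  assert (HLp : 0 < L) by (rewrite HL; nra).
  assert (HmuL : mu <= L) by (rewrite HL; nra).
  assert (HG : forall x, supp d x -> supp d (G x)) by (intros x Hx; apply (proj1 Hsm x Hx)).
  assert (Hgzs : G zs = (fun _ => 0)) by (apply functional_extensionality; apply (grad_min d F G L zs Hsm HLp Hzs Hmin)).
  assert (Hr0 : 0 <= r) by (rewrite Hr; assert (1/s <= 1) by (unfold Rdiv; rewrite Rmult_1_l; apply (Rmult_le_reg_l s); [lra|]; rewrite Rinv_r; lra); lra).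
  assert (Hr1 : r < 1) by (rewrite Hr; assert (0 < 1/s) by (apply Rdiv_lt_0_compat; lra); lra).
  assert (Hrs : r * s = s - 1) by (rewrite Hr; field; lra).
  assert (HF0 : mu / 2 * nrm2 d (vsub z0 zs) <= F z0 - F zs).
  { assert (H := sc1 d F G mu zs z0 Hsc (proj1 Hsm) ltac:(lra) Hzs Hz0). rewrite Hgzs, dot_zero_l in H. lra. }
  assert (HN0 := nrm2_nonneg d (vsub z0 zs)).
  assert (HINT : forall a b, supp d a -> supp d b -> INTe d F G mu L a b >= 0)
    by (intros a b Ha Hb; apply interp; auto; lra).
  set (U := fun m => INTe d F G mu L (tmY G gc gw gy z0 m) zs
                     + mu * L * nrm2 d (vsub (tm_iter G gc gw gy gz z0 (S m)) zs)).
  assert (Hsup := tm_supp G gc gw gy z0 d HG Hz0).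
  assert (Ustep : forall m, U (S m) <= r ^ 2 * U m).
  { intro m. unfold U.
    assert (Hst := tm_vec_step d F G mu L s r gc gw gy gz zs (tmP G gc gw gy z0 m) (tmW G gc gw gy z0 m)
              (tmY G gc gw gy z0 m) (tmY G gc gw gy z0 (S m)) Hmu Hs HL Hr Hgc Hgw Hgy Hgz Hgzs
              (tmY_inv _ _ _ _ _ m) ltac:(rewrite tmY_S, tmW_S; reflexivity)).
    cbv zeta in Hst.
    rewrite (tm_iter_eq _ _ _ _ _ _ (S (S m))), (tm_iter_eq _ _ _ _ _ _ (S m)).
    rewrite !tmP_S, (tmW_S _ _ _ _ _ (S m)), tmP_S, tmW_S.
    destruct (Hsup m) as [_ [_ Hy0]]. destruct (Hsup (S m)) as [_ [_ Hy1]].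
    assert (I1 := HINT _ _ Hzs Hy1). assert (I2 := HINT _ _ Hy0 Hy1).
    assert (0 <= 1 - r ^ 2) by nra. assert (0 <= r ^ 2) by nra.
    assert (0 <= (1 - r^2) * INTe d F G mu L zs (tmY G gc gw gy z0 (S m))) by (apply Rmult_le_pos; lra).
    assert (0 <= r^2 * INTe d F G mu L (tmY G gc gw gy z0 m) (tmY G gc gw gy z0 (S m))) by (apply Rmult_le_pos; lra).
    lra. }
  assert (Uiter : forall m, U m <= (r ^ 2) ^ m * U O).
  { induction m as [|m IHm]. simpl; lra. assert (H := Ustep m).
    assert (r ^ 2 * U m <= r ^ 2 * ((r ^ 2) ^ m * U O)) by (apply Rmult_le_compat_l; [nra|exact IHm]). change ((r ^ 2) ^ S m) with (r ^ 2 * (r ^ 2) ^ m). lra. }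
  assert (U0 : U O <= mu ^ 2 * s ^ 2 * (s - 1) ^ 2 * nrm2 d (vsub z0 zs)).
  { unfold U. assert (Hw := w1_vec d F G mu L s r gc gw gz zs z0 Hmu Hs HL Hr Hgc Hgw Hgz Hgzs).
    cbv zeta in Hw.
    rewrite tm_iter_eq, tmW_S, tmP_S.
    replace (tmY G gc gw gy z0 O) with z0 by reflexivity.
    replace (tmW G gc gw gy z0 O) with z0 by reflexivity.
    replace (tmP G gc gw gy z0 O) with z0 by reflexivity.
    assert (I1 := HINT _ _ Hzs Hz0). assert (I3 := HINT _ _ Hz0 Hzs).
    assert (Hq := nrm2_nonneg d (vsub (vscal L (vsub z0 zs)) (G z0))).
    assert (0 <= 2 * s / (s + 1)) by (apply div_nonneg; lra).
    assert (0 <= (s - 1) / (s + 1)) by (apply div_nonneg; lra).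
    assert (0 <= 2 * s / (s + 1) * INTe d F G mu L zs z0) by (apply Rmult_le_pos; lra).
    assert (0 <= (s - 1) / (s + 1) * INTe d F G mu L z0 zs) by (apply Rmult_le_pos; lra).
    assert (0 <= (s - 1) / (s + 1) * nrm2 d (vsub (vscal L (vsub z0 zs)) (G z0))) by (apply Rmult_le_pos; lra).
    lra. }
  assert (Hs4 : 1 <= s ^ 4) by (replace (s^4) with ((s^2)^2) by ring; assert (1 <= s^2) by nra; nra).
  destruct K as [|m].
  - rewrite tm_iter_eq.
    replace (vsub (vscal (1 + gz) (tmW G gc gw gy z0 O)) (vscal gz (tmP G gc gw gy z0 O))) with z0
      by (apply functional_extensionality; intro; unfold tmW, tmP, vsub, vscal; simpl; ring).
    simpl. assert (0 <= F z0 - F zs) by nra. nra.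
  - set (xK := tm_iter G gc gw gy gz z0 (S m)).
    assert (HxK : supp d xK).
    { unfold xK. rewrite tm_iter_eq. destruct (Hsup (S m)) as [H1 [H2 _]].
      apply supp_vsub; apply supp_vscal; auto. }
    assert (HD := desc d F G L zs xK Hsm ltac:(lra) Hzs HxK). rewrite Hgzs, dot_zero_l in HD.
    assert (Hlow : mu * L * nrm2 d (vsub xK zs) <= U m).
    { unfold U. destruct (Hsup m) as [_ [_ Hy]]. assert (H := HINT _ _ Hy Hzs). fold xK. lra. }
    assert (Hit := Uiter m). rewrite pow_mult2 in Hit.
    assert (HrK : 0 <= r ^ (2 * m)) by (apply pow_le; lra).
    assert (Hc : mu * L * nrm2 d (vsub xK zs) <= r ^ (2 * m) * (mu ^ 2 * s ^ 2 * (s - 1) ^ 2 * nrm2 d (vsub z0 zs))).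
    { eapply Rle_trans; [exact Hlow|]. eapply Rle_trans; [exact Hit|]. apply Rmult_le_compat_l; auto. }
    assert (HNK := nrm2_nonneg d (vsub xK zs)).
    assert (E : r ^ (2 * S m) = r ^ (2 * m) * r ^ 2) by (rewrite <- pow_add; f_equal; lia).
    rewrite E.
    set (c := r ^ (2 * m) * (s ^ 2 * (s - 1) ^ 2)).
    assert (Hc0 : 0 <= c) by (unfold c; apply Rmult_le_pos; [lra| apply Rmult_le_pos; apply pow_le; lra]).
    assert (Hfin : mu * (F xK - F zs) <= mu * (c * (F z0 - F zs))).
    { assert (H1 : mu * (F xK - F zs) <= mu * (L / 2 * nrm2 d (vsub xK zs))) by (apply Rmult_le_compat_l; lra).
      assert (H2 : mu * (L / 2 * nrm2 d (vsub xK zs)) = (mu * L * nrm2 d (vsub xK zs)) / 2) by field.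
      assert (H3 : r ^ (2 * m) * (mu ^ 2 * s ^ 2 * (s - 1) ^ 2 * nrm2 d (vsub z0 zs)) = mu * (c * (mu / 2 * nrm2 d (vsub z0 zs))) * 2)
        by (unfold c; field).
      assert (H4 : c * (mu / 2 * nrm2 d (vsub z0 zs)) <= c * (F z0 - F zs)) by (apply Rmult_le_compat_l; auto).
      assert (H5 : mu * (c * (mu / 2 * nrm2 d (vsub z0 zs))) <= mu * (c * (F z0 - F zs))) by (apply Rmult_le_compat_l; lra).
      lra. }
    assert (Hfin2 : F xK - F zs <= c * (F z0 - F zs)) by (apply (Rmult_le_reg_l mu); auto).
    replace (s ^ 4 * (r ^ (2 * m) * r ^ 2)) with (r ^ (2 * m) * (s ^ 2 * (r * s) ^ 2)) by ring.
    rewrite Hrs. fold c. exact Hfin2.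
Qed.


Lemma k_mono n m k : CanonIdx n m k -> forall a b, (a < b <= m)%nat -> (k a < k b)%nat.
Proof. intros [_ [_ [_ Hk]]] a b. induction b; intros Hab; [lia|].
  assert (H := Hk (S b) ltac:(lia)). replace (S b - 1)%nat with b in H by lia.
  destruct (Nat.eq_dec a b) as [->|]; auto. assert (k a < k b)%nat by (apply IHb; lia). lia. Qed.

Lemma k_mono_le n m k : CanonIdx n m k -> forall a b, (a <= b <= m)%nat -> (k a <= k b)%nat.
Proof. intros Hc a b H. destruct (Nat.eq_dec a b) as [->|]; [lia|]. assert (k a < k b)%nat by (apply (k_mono n m k Hc); lia). lia. Qed.

Lemma block_exists n m k : CanonIdx n m k -> forall i, (1 <= i <= n)%nat ->
  exists j, (1 <= j <= m)%nat /\ (k (j - 1) < i <= k j)%nat.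
Proof. intros Hc i Hi. destruct Hc as [Hm [Hk0 [Hkm Hk]]].
  assert (H : forall j, (i <= k j)%nat -> exists j', (1 <= j' <= j)%nat /\ (k (j' - 1) < i <= k j')%nat).
  { induction j; intros Hij. rewrite Hk0 in Hij; lia.
    destruct (le_lt_dec i (k j)) as [Hle|Hlt].
    - destruct (IHj Hle) as [j' [H1 H2]]. exists j'; split; [lia|auto].
    - exists (S j); split; [lia|]. replace (S j - 1)%nat with j by lia. lia. }
  destruct (H m ltac:(lia)) as [j [H1 H2]]. exists j; split; auto. Qed.

Lemma block_unique n m k : CanonIdx n m k -> forall i j j', (1 <= j <= m)%nat -> (1 <= j' <= m)%nat ->
  (k (j - 1) < i <= k j)%nat -> (k (j' - 1) < i <= k j')%nat -> j = j'.
Proof. intros Hc i j j' Hj Hj' H1 H2.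
  destruct (lt_eq_lt_dec j j') as [[Hlt|]|Hlt]; auto.
  - assert (k j <= k (j' - 1))%nat by (apply (k_mono_le n m k Hc); lia). lia.
  - assert (k j' <= k (j - 1))%nat by (apply (k_mono_le n m k Hc); lia). lia. Qed.

Lemma block_sum n m k (V : nat -> R) i j0 : CanonIdx n m k -> (1 <= j0 <= m)%nat ->
  (k (j0 - 1) < i <= k j0)%nat ->
  fsum m (fun j => if andb (k (j - 1) <? i)%nat (i <=? k j)%nat then V j else 0) = V j0.
Proof. intros Hc Hj0 Hb.
  rewrite (fsum_single m _ j0 Hj0).
  - destruct (Nat.ltb_spec0 (k (j0 - 1)%nat) i); destruct (Nat.leb_spec0 i (k j0)); simpl; auto; lia.
  - intros j Hj Hne. destruct (Nat.ltb_spec0 (k (j - 1)%nat) i); destruct (Nat.leb_spec0 i (k j)); simpl; auto.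
    exfalso. apply Hne. apply (block_unique n m k Hc i); auto; lia. Qed.

Lemma xz_block n m N k z t i j0 : CanonIdx n m k -> (1 <= i <= n)%nat -> (1 <= j0 <= m)%nat ->
  (k (j0 - 1) < i <= k j0)%nat ->
  xz n m N k z t i = if (k j0 <? t + i)%nat then zc N m z (t + i - k j0)%nat j0 else 0.
Proof. intros Hc Hi Hj0 Hb. unfold xz.
  destruct (Nat.leb_spec0 1 i); destruct (Nat.leb_spec0 i n); try lia. simpl.
  apply (block_sum n m k (fun j => if (k j <? t + i)%nat then zc N m z (t + i - k j) j else 0) i j0 Hc Hj0 Hb). Qed.

Lemma notI_of_block n m k i j0 : CanonIdx n m k -> (1 <= j0 <= m)%nat ->
  (k (j0 - 1) < i < k j0)%nat -> ~ InI m k i.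
Proof. intros Hc Hj0 Hb [j [Hj Hkj]].
  assert (j = j0). { apply (block_unique n m k Hc i); auto; [|lia].
    split; [|lia]. assert (k (j - 1) < k j)%nat by (apply (k_mono n m k Hc); lia). lia. }
  subst; lia. Qed.

Lemma Bmat_kj n m k j0 : CanonIdx n m k -> (1 <= j0 <= m)%nat -> forall (u : nat -> R),
  fsum m (fun j => Bmat k (k j0) j * u j) = u j0.
Proof. intros Hc Hj0 u. rewrite (fsum_single m _ j0 Hj0).
  - unfold Bmat. rewrite Nat.eqb_refl. ring.
  - intros j Hj Hne. unfold Bmat. destruct (Nat.eqb_spec (k j0) (k j)); [|ring].
    exfalso. destruct (lt_eq_lt_dec j j0) as [[Hlt|]|Hlt]; auto.
    + assert (k j < k j0)%nat by (apply (k_mono n m k Hc); lia). lia.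
    + assert (k j0 < k j)%nat by (apply (k_mono n m k Hc); lia). lia. Qed.

Lemma Bmat_notI m k i : ~ InI m k i -> forall (u : nat -> R), fsum m (fun j => Bmat k i j * u j) = 0.
Proof. intros HI u. apply fsum_zero. intros j Hj. unfold Bmat. destruct (Nat.eqb_spec i (k j)); [|ring].
  exfalso; apply HI; exists j; auto. Qed.

Lemma A_notI n m k A i : CanonA n m k A -> (1 <= i < n)%nat -> ~ InI m k i ->
  forall (x : nat -> R), fsum n (fun l => A i l * x l) = x (S i).
Proof. intros HA Hi HI x. rewrite (fsum_single n _ (S i) ltac:(lia)).
  - rewrite (HA i ltac:(lia) HI (S i) ltac:(lia)). rewrite Nat.eqb_refl. ring.
  - intros l Hl Hne. rewrite (HA i ltac:(lia) HI l Hl). destruct (Nat.eqb_spec l (S i)); [lia|ring]. Qed.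


Lemma inI_dec n m k i : CanonIdx n m k -> (1 <= i <= n)%nat ->
  exists j0, (1 <= j0 <= m)%nat /\ (k (j0 - 1) < i <= k j0)%nat /\ (i = k j0 \/ ~ InI m k i).
Proof. intros Hc Hi. destruct (block_exists n m k Hc i Hi) as [j0 [Hj0 Hb]].
  exists j0; repeat split; try lia.
  destruct (Nat.eq_dec i (k j0)); [left; auto|right].
  apply (notI_of_block n m k i j0 Hc Hj0); lia. Qed.

Lemma forward_feasible n m N k A z : CanonIdx n m k -> CanonA n m k A ->
  Feasible n m N k A (xz n m N k z) (uz n m N k A z).
Proof.
  intros Hc HA. assert (Hkn : forall j, (1 <= j <= m)%nat -> (1 <= k j <= n)%nat).
  { intros j Hj. destruct Hc as [Hm [Hk0 [Hkm Hk]]] eqn:Hc'.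
    assert (k 0 < k j)%nat by (apply (k_mono n m k Hc); lia).
    assert (k j <= k m)%nat by (apply (k_mono_le n m k Hc); lia). lia. }
  split; [|split; [|split]].
  - intros t Ht i Hi. unfold xz. destruct Hi as [->| Hi]; simpl; auto.
    destruct (Nat.leb_spec0 i n); [lia|]. rewrite andb_false_r. auto.
  - intros t Ht j Hj. unfold uz. destruct Hj as [->| Hj]; simpl; auto.
    destruct (Nat.leb_spec0 j m); [lia|]. rewrite andb_false_r. auto.
  - intros i. destruct (le_lt_dec 1 i); [destruct (le_lt_dec i n)|].
    + destruct (block_exists n m k Hc i ltac:(lia)) as [j0 [Hj0 Hb]].
      rewrite (xz_block n m N k z 0 i j0 Hc ltac:(lia) Hj0 Hb).
      destruct (Nat.ltb_spec0 (k j0) (0 + i)); auto. lia.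
    + unfold xz. destruct (Nat.leb_spec0 i n); [lia|]. rewrite andb_false_r. auto.
    + unfold xz. destruct (Nat.leb_spec0 1 i); [lia|]. auto.
  - intros t Ht i Hi.
    destruct (inI_dec n m k i Hc Hi) as [j0 [Hj0 [Hb [Heq|HnI]]]].
    + subst i. rewrite (Bmat_kj n m k j0 Hc Hj0).
      rewrite (xz_block n m N k z (S t) (k j0) j0 Hc Hi Hj0 Hb).
      destruct (Nat.ltb_spec0 (k j0) (S t + k j0)); [|lia].
      replace (S t + k j0 - k j0)%nat with (S t) by lia.
      unfold uz. destruct (Nat.leb_spec0 1 j0); destruct (Nat.leb_spec0 j0 m); try lia. simpl. ring.
    + rewrite (Bmat_notI m k i HnI).
      assert (Hin : (i < k j0)%nat).
      { destruct (Nat.eq_dec i (k j0)); [|lia]. exfalso; apply HnI; exists j0; auto. }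
      assert (Hkj0 := Hkn j0 Hj0).
      rewrite (A_notI n m k A i HA ltac:(lia) HnI).
      rewrite (xz_block n m N k z (S t) i j0 Hc Hi Hj0 Hb).
      rewrite (xz_block n m N k z t (S i) j0 Hc ltac:(lia) Hj0 ltac:(lia)).
      replace (t + S i)%nat with (S t + i)%nat by lia. ring.
Qed.


Definition zstar (m N : nat) (k : nat -> nat) (x : nat -> nat -> R) : nat -> R :=
  fun p => if andb (1 <=? p)%nat (p <=? m * N)%nat then x (S ((p - 1) / m)) (k (S ((p - 1) mod m))) else 0.

Lemma zstar_supp m N k x : supp (m * N) (zstar m N k x).
Proof. intros i Hi. unfold zstar. destruct Hi as [->|Hi]; simpl; auto.
  destruct (Nat.leb_spec0 i (m * N)); [lia|]. rewrite andb_false_r; auto. Qed.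

Lemma zc_zstar m N k x t j : (1 <= t <= N)%nat -> (1 <= j <= m)%nat ->
  zc N m (zstar m N k x) t j = x t (k j).
Proof. intros Ht Hj. unfold zc, zstar.
  destruct (Nat.leb_spec0 1 t); destruct (Nat.leb_spec0 t N); try lia. cbn [andb].
  assert (H1 : (1 <= (t - 1) * m + j)%nat) by nia.
  assert (Hle : ((t - 1) * m + j <= m * N)%nat) by (destruct t; [lia|]; replace (S t - 1)%nat with t by lia; nia).
  rewrite (proj2 (Nat.leb_le 1 _) H1), (proj2 (Nat.leb_le _ (m * N)) Hle). cbn [andb].
  assert (Hq : (t - 1)%nat = (((t - 1) * m + j - 1) / m)%nat) by (apply (Nat.div_unique _ _ _ (j - 1)); lia).
  assert (Hr : (j - 1)%nat = (((t - 1) * m + j - 1) mod m)%nat) by (apply (Nat.mod_unique _ _ (t - 1) _); lia).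
  rewrite <- Hq, <- Hr. replace (S (t - 1)) with t by lia. replace (S (j - 1)) with j by lia. reflexivity. Qed.

Section Conv.
Variables (n m N : nat) (k : nat -> nat) (A : nat -> nat -> R) (x u : nat -> nat -> R).
Hypothesis Hc : CanonIdx n m k.
Hypothesis HA : CanonA n m k A.
Hypothesis Hf : Feasible n m N k A x u.

Lemma shift_lemma j0 : (1 <= j0 <= m)%nat -> forall dd i t, (k (j0 - 1) < i)%nat -> (i + dd = k j0)%nat ->
  (t <= N)%nat -> x t i = if (k j0 <? t + i)%nat then x (t + i - k j0)%nat (k j0) else 0.
Proof.
  intros Hj0. destruct Hf as [Hsx [Hsu [Hx0 Hdyn]]].
  assert (Hkn : (k j0 <= n)%nat) by (destruct Hc as [_ [_ [Hkm _]]]; rewrite <- Hkm; apply (k_mono_le n m k Hc); lia).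
  induction dd; intros i t Hi Hid Ht.
  - replace (k j0) with i by lia. destruct t.
    + rewrite Hx0. destruct (Nat.ltb_spec0 i (0 + i)); [lia|auto].
    + destruct (Nat.ltb_spec0 i (S t + i)); [|lia]. f_equal. lia.
  - destruct t.
    + rewrite Hx0. destruct (Nat.ltb_spec0 (k j0) (0 + i)); [lia|auto].
    + assert (HnI : ~ InI m k i) by (apply (notI_of_block n m k i j0 Hc Hj0); lia).
      rewrite (Hdyn t ltac:(lia) i ltac:(lia)).
      rewrite (Bmat_notI m k i HnI). rewrite (A_notI n m k A i HA ltac:(lia) HnI).
      rewrite (IHdd (S i) t ltac:(lia) ltac:(lia) ltac:(lia)).
      replace (t + S i)%nat with (S t + i)%nat by lia. ring.
Qed.

Lemma xz_zstar t : (t <= N)%nat -> xz n m N k (zstar m N k x) t = x t.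
Proof.
  intros Ht. destruct Hf as [Hsx [Hsu [Hx0 Hdyn]]].
  apply functional_extensionality; intro i.
  destruct (le_lt_dec 1 i); [destruct (le_lt_dec i n)|].
  - destruct (block_exists n m k Hc i ltac:(lia)) as [j0 [Hj0 Hb]].
    rewrite (xz_block n m N k _ t i j0 Hc ltac:(lia) Hj0 Hb).
    rewrite (shift_lemma j0 Hj0 (k j0 - i) i t ltac:(lia) ltac:(lia) Ht).
    destruct (Nat.ltb_spec0 (k j0) (t + i)); auto.
    apply zc_zstar; lia.
  - unfold xz. destruct (Nat.leb_spec0 i n); [lia|]. rewrite andb_false_r. rewrite (Hsx t Ht i); auto; lia.
  - unfold xz. destruct (Nat.leb_spec0 1 i); [lia|]. simpl. rewrite (Hsx t Ht i); auto; lia.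
Qed.

Lemma uz_zstar t : (t < N)%nat -> uz n m N k A (zstar m N k x) t = u t.
Proof.
  intros Ht. assert (Hf' := Hf). destruct Hf' as [Hsx [Hsu [Hx0 Hdyn]]].
  apply functional_extensionality; intro j. unfold uz.
  destruct (le_lt_dec 1 j); [destruct (le_lt_dec j m)|].
  - destruct (Nat.leb_spec0 1 j); destruct (Nat.leb_spec0 j m); try lia. simpl.
    rewrite xz_zstar by lia. rewrite zc_zstar by lia.
    assert (Hkn : (1 <= k j <= n)%nat).
    { destruct Hc as [Hm [Hk0 [Hkm Hk]]].
      assert (k 0 < k j)%nat by (apply (k_mono n m k Hc); lia).
      assert (k j <= k m)%nat by (apply (k_mono_le n m k Hc); lia). lia. }
    rewrite (Hdyn t Ht (k j) Hkn). rewrite (Bmat_kj n m k j Hc ltac:(lia)). ring.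
  - destruct (Nat.leb_spec0 j m); [lia|]. rewrite andb_false_r. rewrite (Hsu t Ht j); auto; lia.
  - destruct (Nat.leb_spec0 1 j); [lia|]. simpl. rewrite (Hsu t Ht j); auto; lia.
Qed.

Lemma J_zstar f g : Jcost N f g (xz n m N k (zstar m N k x)) (uz n m N k A (zstar m N k x)) = Jcost N f g x u.
Proof. unfold Jcost. rewrite xz_zstar by lia. f_equal. apply sum_lt_ext. intros t Ht.
  rewrite xz_zstar by lia. rewrite uz_zstar by lia. reflexivity. Qed.
End Conv.

Lemma J_C n m N k A f g z : Jcost N f g (xz n m N k z) (uz n m N k A z) = Ccost n m N k A f g z.
Proof. unfold Jcost, Ccost. simpl. rewrite sum_lt_add. ring. Qed.


Lemma zc_N0 m z : zc 0 m z = (fun _ _ => 0).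
Proof. apply functional_extensionality; intro t; apply functional_extensionality; intro j.
  unfold zc. destruct t; simpl; auto. Qed.

Theorem theorem1
  (n m N W : nat) (k : nat -> nat) (A : nat -> nat -> R)
  (f g : nat -> (nat -> R) -> R) (mu_f l_f l_g : R)
  (mu_c l_c : R) (gradC : (nat -> R) -> nat -> R)
  (phi : Oracle) (Jstar : R)
  (Hk : CanonIdx n m k)
  (HA : CanonA n m k A)
  (Hmuf : 0 < mu_f)
  (Hf : forall t, (t <= N)%nat -> StronglyConvex n mu_f (f t) /\ Smooth n l_f (f t))
  (Hg : forall t, (t < N)%nat -> StronglyConvex m 0 (g t) /\ Smooth m l_g (g t))
  (HW : (1 <= W)%nat)
  (Hmuc : 0 < mu_c) (Hlc : 0 < l_c)
  (HCconv : StronglyConvex (m * N) mu_c (Ccost n m N k A f g))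
  (HCsmooth : SmoothWith (m * N) l_c (Ccost n m N k A f g) gradC)
  (Hphi : IsInitOracle m N phi)
  (HJ : IsOptVal n m N k A f g Jstar) :
  let K := ((W - 1) / pmax k m)%nat in
  let zeta := l_c / mu_c in
  let z0 := phi f g in
  let gam_g := 1 / l_c in
  let ph := 1 - 1 / sqrt zeta in
  let gam_c := (1 + ph) / l_c in
  let gam_w := ph ^ 2 / (2 - ph) in
  let gam_y := ph ^ 2 / ((1 + ph) * (2 - ph)) in
  let gam_z := ph ^ 2 / (1 - ph ^ 2) in
  RegretZ n m N k A f g Jstar (gd_iter gradC gam_g z0 K)
    <= zeta * ((zeta - 1) / zeta) ^ K * RegretZ n m N k A f g Jstar z0
  /\
  RegretZ n m N k A f g Jstar (tm_iter gradC gam_c gam_w gam_y gam_z z0 K)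
    <= zeta ^ 2 * ((sqrt zeta - 1) / sqrt zeta) ^ (2 * K)
       * RegretZ n m N k A f g Jstar z0.
Proof.
  intros K zeta z0 gam_g ph gam_c gam_w gam_y gam_z.
  set (F := Ccost n m N k A f g) in *.
  destruct HJ as [[xo [uo [Hfo HJo]]] Hopt].
  set (zs := zstar m N k xo).
  assert (HCzs : F zs = Jstar).
  { unfold F. rewrite <- J_C. unfold zs. rewrite (J_zstar n m N k A xo uo Hk HA Hfo). auto. }
  assert (Hmin : forall z, supp (m * N) z -> F zs <= F z).
  { intros z _. rewrite HCzs. unfold F. rewrite <- J_C. apply Hopt. apply forward_feasible; auto. }
  assert (Hreg : forall z, RegretZ n m N k A f g Jstar z = F z - F zs).
  { intro z. unfold RegretZ. rewrite J_C, HCzs. reflexivity. }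
  rewrite !Hreg.
  assert (Hz0 : supp (m * N) z0) by (apply (proj1 Hphi)).
  assert (Hzs : supp (m * N) zs) by apply zstar_supp.
  destruct N as [|N'].
  - assert (Hc : forall z, F z = F zs).
    { intro z. unfold F, Ccost. unfold xz, uz. rewrite !zc_N0. reflexivity. }
    assert (H0 : forall z, F z - F zs = 0) by (intro z; rewrite (Hc z); ring). rewrite !H0. split; right; ring.
  - set (N := S N') in *.
    assert (Hd : (1 <= m * N)%nat) by (destruct Hk as [Hm _]; unfold N; nia).
    set (d := (m * N)%nat) in *.
    set (e1 := fun i : nat => if Nat.eqb i 1 then 1 else 0).
    assert (He1 : supp d e1) by (intros i [->|Hi]; unfold e1; simpl; auto; destruct (Nat.eqb_spec i 1); auto; lia).
    set (o := fun _ : nat => 0).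
    assert (Ho : supp d o) by (intros i _; reflexivity).
    assert (Hn1 : nrm2 d (vsub e1 o) = 1).
    { unfold nrm2, dot. rewrite (fsum_single d _ 1 ltac:(lia)).
      - unfold vsub, e1, o. simpl. ring.
      - intros i Hi Hne. unfold vsub, e1, o. destruct (Nat.eqb_spec i 1); [lia|ring]. }
    assert (HmuL : mu_c <= l_c).
    { assert (H1 := sc1 d F gradC mu_c o e1 HCconv (proj1 HCsmooth) ltac:(lra) Ho He1).
      assert (H2 := desc d F gradC l_c o e1 HCsmooth ltac:(lra) Ho He1).
      rewrite Hn1 in H1, H2. lra. }
    assert (Hzeta : 1 <= zeta).
    { unfold zeta. apply (Rmult_le_reg_r mu_c); auto. unfold Rdiv. rewrite Rmult_assoc, Rinv_l; lra. }
    assert (HX : 0 <= F z0 - F zs) by (assert (H := Hmin z0 Hz0); lra).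
    split.
    + assert (H := gd_bound d F gradC mu_c l_c z0 zs HCconv HCsmooth ltac:(lra) Hz0 Hzs Hmin K).
      assert (E : 1 - mu_c / l_c = (zeta - 1) / zeta) by (unfold zeta; field; lra).
      rewrite E in H. fold gam_g in H.
      assert (Hr0 : 0 <= (zeta - 1) / zeta) by (apply div_nonneg; lra).
      assert (Hp : 0 <= ((zeta - 1) / zeta) ^ K) by (apply pow_le; auto).
      assert (0 <= ((zeta - 1) / zeta) ^ K * (F z0 - F zs)) by (apply Rmult_le_pos; auto).
      assert (((zeta - 1) / zeta) ^ K * (F z0 - F zs) <= zeta * (((zeta - 1) / zeta) ^ K * (F z0 - F zs))) by nra.
      rewrite Rmult_assoc. lra.
    + set (s := sqrt zeta).
      assert (Hs1 : 1 <= s) by (unfold s; rewrite <- sqrt_1; apply sqrt_le_1_alt; lra).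
      assert (Hs2 : s ^ 2 = zeta) by (unfold s; rewrite <- Rsqr_pow2; apply Rsqr_sqrt; lra).
      assert (HL : l_c = mu_c * s ^ 2) by (rewrite Hs2; unfold zeta; field; lra).
      assert (H := tm_bound d F gradC mu_c l_c s ph gam_c gam_w gam_y gam_z z0 zs HCconv HCsmooth Hmuc
                    Hs1 HL eq_refl eq_refl eq_refl eq_refl eq_refl Hz0 Hzs Hmin K).
      assert (E1 : (s - 1) / s = ph) by (unfold ph; fold s; field; lra).
      assert (E2 : zeta ^ 2 = s ^ 4) by (rewrite <- Hs2; ring).
      rewrite E1, E2. exact H.
Qed.
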